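(* Let $x<y$ be real numbers and $t\ge s\ge 0$ with $s\ge r(x)\vee r(y)$. Then (i) for any (possibly random) time $\varsigma$, $$\{X_\varsigma\in(x,y),\ \tau\ge\varsigma\ge t\}\subset\{X_s\in(x,y)\};$$ (ii) $\mu[(x,y)]\le\mu_t[(x,y)]$.
   Context: Standing setting. $(\Omega,\mathcal F,\mathbb P)$ is a complete probability space supporting a standard Brownian motion $W$ and an independent random variable $X_0\sim\mu_0$. The function $\sigma:[0,\infty)\times\mathbb R\to\mathbb R$ satisfies, for some $k\ge0$, $|\sigma(t,x)-\sigma(t,y)|\le k|x-y|$ and $|\sigma(t,x)|\le k(1+|x|)$ for all $t\ge0$, $x,y\in\mathbb R$; $X$ is the unique strong (Markov) solution of $\mathrm dX_t=\sigma(t,X_t)\,\mathrm dW_t$ with initial condition $X_0$. There is an open set $\mathcal O\subset\mathbb R$ such that $\sigma$ is bounded away from zero on $[0,\infty)\times K$ for every compact $K\subset\mathcal O$, $\sigma$ is $C^{1,2}$ on $[0,\infty)\times\mathcal O$, and $X$ and $\mu_0$ take values in $\mathcal O$. $\mu$ is a probability measure on $\mathcal O$ with $u_{\mu_0}(x)\ge u_\mu(x)>-\infty$ for all $x$, where $u_\nu(x)=-\int_{\mathbb R}|x-y|\,\mathrm d\nu(y)$. A Root barrier is a lower semicontinuous $r:[-\infty,\infty]\to[0,\infty]$ with $r(\pm\infty)=0$ such that $\tau=\inf\{t\ge0: t\ge r(X_t)\}$ satisfies $X_\tau\sim\mu$ and $(X_{t\wedge\tau})_{t\ge0}$ is uniformly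 integrable; $r$ is assumed to be such a barrier and regular, i.e. $u_{\mu_0}(x)=u_\mu(x)$ implies $r(x)=0$ (equivalently $r$ vanishes outside $\mathcal I=\{x: u_{\mu_0}(x)\ne u_\mu(x)\}$). For $t\ge0$ and Borel $A$, $\mu_t[A]=\mathbb P[X_{t\wedge\tau}\in A]$. *)

(* Defs.v *)
From HB Require Import structures.
From mathcomp Require Import all_boot all_order all_algebra.
From mathcomp Require Import all_classical all_reals all_analysis.
Set Implicit Arguments. Unset Strict Implicit. Unset Printing Implicit Defensive.
Import Order.TTheory GRing.Theory Num.Theory.
Import numFieldNormedType.Exports.
Local Open Scope classical_set_scope.
Local Open Scope ring_scope.
Local Open Scope ereal_scope.

(* Root stopping time: tau = inf { t >= 0 : t >= r(X_t) } (inf of empty set = +oo). *)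
Definition root_time (R : realType) (Omega : Type) (X : R -> Omega -> R)
  (r : \bar R -> \bar R) (w : Omega) : \bar R :=
  ereal_inf [set t%:E | t in [set t : R | (0 <= t)%R /\ r (X t w)%:E <= t%:E]].

Definition stopped (R : realType) (Omega : Type) (X : R -> Omega -> R)
  (tau : Omega -> \bar R) (t : R) (w : Omega) : R :=
  if t%:E <= tau w then X t w else X (fine (tau w)) w.

Definition potential (R : realType) (nu : set R -> \bar R) (x : R) : \bar R :=
  - \int[nu]_y (`|x - y|%R)%:E.

Definition unif_integrable (R : realType) d (Omega : measurableType d)
  (P : probability Omega R) (Y : R -> Omega -> R) : Prop :=
  forall e : R, (0 < e)%R -> exists K : R, forall t : R, (0 <= t)%R ->
    \int[P]_(w in [set w | (K < `|Y t w|)%R]) (`|Y t w|)%:E < e%:E.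

Definition mu_t (R : realType) d (Omega : measurableType d)
  (P : probability Omega R) (X : R -> Omega -> R) (tau : Omega -> \bar R)
  (t : R) (A : set R) : \bar R :=
  P [set w | A (stopped X tau t w)].

(* Main.v *)
Require Import Defs.
From HB Require Import structures.
From mathcomp Require Import all_boot all_order all_algebra.
From mathcomp Require Import all_classical all_reals all_analysis.
From mathcomp Require Import ring lra measurable_realfun.
Import Order.TTheory GRing.Theory Num.Theory.
Import numFieldNormedType.Exports.
Local Open Scope classical_set_scope.
Local Open Scope ring_scope.

Lemma Xcont_at (R : realType) (f : R -> R) :
  {within [set t : R | 0 <= t], continuous f} ->
  forall u : R, 0 <= u -> forall e : R, 0 < e -> \forall v \near u, 0 <= v -> `|f u - f v| < e.
Proof.
move=> fc u u0 e e0.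
have := (subspace_continuousP _ _).1 fc u u0.
by move/cvgrPdist_lt => /(_ e e0).
Qed.

Definition Vset (R : realType) (r : \bar R -> \bar R) (q : R) (n : nat) : set R :=
  \bigcup_(p in [set p : R * R | `|q - p.1| < n.+1%:R^-1 /\ (r p.2%:E <= p.1%:E)%E])
     ball p.2 (n.+1%:R^-1).

Lemma Vset_open (R : realType) r q n : open (@Vset R r q n).
Proof. by apply: bigcup_open => p _; exact: ball_open. Qed.

Lemma exists_a (R : realType) (u : R) (z : \bar R) : (u%:E < z)%E ->
  exists a : R, u < a /\ (a%:E < z)%E.
Proof.
case: z => [f||] //=; rewrite ?lte_fin => uf.
- exists ((u + f) / 2); split; rewrite ?lte_fin.
  + by rewrite ltr_pdivlMr // mulr2n mulrDr mulr1 ltrD2l.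
  + by rewrite ltr_pdivrMr // mulr2n mulrDr mulr1 ltrD2r.
- by exists (u + 1); split; [rewrite ltrDl|rewrite ltry].
Qed.

Lemma cover_step (R : realType) (f : R -> R) (r : \bar R -> \bar R) (u : R) :
  {within [set t : R | 0 <= t], continuous f} -> lower_semicontinuous r ->
  0 <= u -> (u%:E < r (f u)%:E)%E ->
  \forall x' \near u & i \near \oo, 0 <= x' -> ~ @Vset R r x' i (f x').
Proof.
move=> fc rl u0 ur.
have [a [ua ar]] := @exists_a R u _ ur.
have [V Vn Va] := rl _ _ ar.
have : \forall z \near f u, (a%:E < r z%:E)%E.
  have H := (@nbhs_EFin R (fun y => a%:E < r y)%E (f u)).1.
  by apply: H; apply: filterS Vn => z; exact: Va.
move=> /nbhs_ballP [e /= e0 eb].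
have e20 : 0 < e / 2 by rewrite divr_gt0.
have := @Xcont_at R f fc u u0 _ e20 => /nbhs_ballP [d /= d0 db].
have au0 : 0 < (a - u) / 2 by rewrite divr_gt0 // subr_gt0.
pose th := Num.min (e / 2) ((a - u) / 2).
have th0 : 0 < th by rewrite lt_min e20 au0.
exists (ball u (Num.min d ((a - u) / 2)), [set n : nat | n.+1%:R^-1 < th]).
  split; first by apply: nbhsx_ballx; rewrite lt_min d0 au0.
  exact: (@near_infty_natSinv_lt R (PosNum th0)).
move=> [v n] /= [vb nb] v0 [[p1 p2] /= [pq rp] pb].
move: vb; rewrite /ball /= lt_min => /andP[vd vau].
move: nb; rewrite lt_min => /andP[ne nau].
move: pb; rewrite /ball /= => pb.
have fuv : `|f u - f v| < e / 2 by apply: (db v) => //; rewrite /ball /=.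
have : (a%:E < r p2%:E)%E.
  apply: eb; rewrite /ball /=.
  have -> : f u - p2 = (f u - f v) + (f v - p2) by rewrite addrA subrK.
  apply: (le_lt_trans (ler_normD _ _)).
  by rewrite (splitr e) ltrD // distrC (lt_trans pb ne).
move=> /lt_le_trans /(_ rp); rewrite lte_fin => ap1.
have : p1 < a.
  have h1 : v - u <= `|u - v| by rewrite distrC; exact: ler_norm.
  have h2 : p1 - v <= `|v - p1| by rewrite distrC; exact: ler_norm.
  move: pq nau vau h1 h2; set A := `|u - v|; set B := `|v - p1|; set N := n.+1%:R^-1; move=> *; lra.
by rewrite ltNge (ltW ap1).
Qed.
Lemma dens (R : realType) (u c d : R) : 0 <= u -> u <= c -> 0 < d ->
  exists q0 : rat, 0 <= (ratr q0 : R) <= c /\ `|u - ratr q0| < d.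
Proof.
move=> u0 uc d0.
case: (ltP u c) => [ltuc|cu].
  have : u < Num.min (u + d) c by rewrite lt_min ltuc ltrDl d0.
  move=> /rat_in_itvoo[q]; rewrite in_itv /= lt_min => /andP[uq /andP[qud qc]].
  exists q; split; first by rewrite (ltW qc) andbT (le_trans u0) // ltW.
  rewrite ler0_norm ?subr_le0 ?(ltW uq) //; lra.
have uc' : u = c by apply/eqP; rewrite eq_le uc cu.
case: (ltP 0 u) => [u0'|u0'].
  have : Num.max (u - d) 0 < u by rewrite gt_max u0' gtrBl d0.
  move=> /rat_in_itvoo[q]; rewrite in_itv /= gt_max => /andP[/andP[udq q0] qu].
  exists q; split; first by rewrite (ltW q0) -uc' ltW.
  rewrite ger0_norm ?subr_ge0 ?(ltW qu) //; lra.
have u00 : u = 0 by apply/eqP; rewrite eq_le u0 u0'.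
exists 0%R; split; first by rewrite rmorph0 lexx -uc' u00 lexx.
by rewrite rmorph0 u00 subr0 normr0.
Qed.

Definition qk (R : realType) (k : nat) : R := ratr (odflt 0%R (pickle_inv k)).

Definition Sset (R : realType) (Omega : Type) (X : R -> Omega -> R)
  (r : \bar R -> \bar R) (c : R) : set Omega :=
  [set w | forall u, 0 <= u <= c -> (u%:E < r (X u w)%:E)%E].

Definition Tset (R : realType) (Omega : Type) (X : R -> Omega -> R)
  (r : \bar R -> \bar R) (c : R) (n k : nat) : set Omega :=
  if 0 <= qk R k <= c then X (qk R k) @^-1` (~` @Vset R r (qk R k) n) else setT.

Lemma S_eq (R : realType) (Omega : Type) (X : R -> Omega -> R)
  (r : \bar R -> \bar R) (c : R) :
  (forall w, {within [set t : R | 0 <= t], continuous (X ^~ w)}) ->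
  lower_semicontinuous r ->
  @Sset R Omega X r c = \bigcup_n \bigcap_k @Tset R Omega X r c n k.
Proof.
move=> Xc rl; apply/seteqP; split => w.
- move=> Sw.
  have cov := (near_covering_withinP _).2 ((compact_near_coveringP _).1 (@segment_compact R 0 c)).
  have [N _ HN] : \forall i \near \oo, `[0, c]%classic `<=` (fun x => ~ @Vset R r x i (X x w)).
    apply: cov => u; rewrite /= in_itv /= => /andP[u0 uc].
    apply: filterS (@cover_step R (X ^~ w) r u (Xc w) rl u0 (Sw u _)); last by rewrite u0.
    move=> [x' i] /= H; rewrite in_itv /= => /andP[x0 _]; exact: H.
  exists N => // k _; rewrite /Tset; case: ifP => // /andP[q0 qc].
  by apply: (HN N (leqnn N)); rewrite /= in_itv /= q0.
- move=> [n _ Hn] u /andP[u0 uc]; rewrite ltNge; apply/negP => ru.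
  have e0 : 0 < n.+1%:R^-1 :> R by rewrite invr_gt0.
  have := @Xcont_at R (X ^~ w) (Xc w) u u0 _ e0 => /nbhs_ballP [d /= d0 db].
  have md0 : 0 < Num.min d n.+1%:R^-1 by rewrite lt_min d0 e0.
  have [q0 [/andP[q00 q0c] uq]] := @dens R u c (Num.min d n.+1%:R^-1) u0 uc md0.
  have := Hn (pickle q0) I; rewrite /Tset /qk pickleK_inv /= q00 q0c /=.
  apply; exists (u, X u w) => /=.
    by move: uq; rewrite lt_min distrC => /andP[_ ->].
  rewrite /ball /=; apply: (db (ratr q0)) => //.
  by move: uq; rewrite /ball /= lt_min => /andP[->].
Qed.

Lemma S_meas (R : realType) d (Omega : measurableType d) (X : R -> Omega -> R)
  (r : \bar R -> \bar R) (c : R) :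
  (forall t, 0 <= t -> measurable_fun setT (X t)) ->
  (forall w, {within [set t : R | 0 <= t], continuous (X ^~ w)}) ->
  lower_semicontinuous r ->
  measurable (@Sset R Omega X r c).
Proof.
move=> Xm Xc rl; rewrite (@S_eq R Omega X r c Xc rl).
apply: bigcupT_measurable => n; apply: bigcapT_measurable => k.
rewrite /Tset; case: ifP => // /andP[q0 _].
rewrite -(setTI (_ @^-1` _)); apply: (Xm _ q0) => //.
apply: measurableC; apply: open_measurable; exact: Vset_open.
Qed.
Lemma cont_sub (R : realType) (f : R -> R) a b : 0 <= a ->
  {within [set t : R | 0 <= t], continuous f} ->
  {within `[a, b], continuous f}.
Proof.
move=> a0 fc; apply/subspace_continuousP => u.
rewrite /= in_itv /= => /andP[au ub].
apply/cvgrPdist_lt => e e0.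
have := @Xcont_at R f fc u (le_trans a0 au) e e0.
apply: filter_app; near=> v => H.
rewrite /= in_itv /= => /andP[av _]; apply: H; exact: le_trans a0 av.
Unshelve. all: by end_near. Qed.

Lemma tau_le (R : realType) (Omega : Type) (X : R -> Omega -> R) r w (u : R) :
  0 <= u -> (r (X u w)%:E <= u%:E)%E -> (root_time X r w <= u%:E)%E.
Proof. by move=> u0 ru; apply: ereal_inf_lbound; exists u. Qed.

Lemma tau_ge0 (R : realType) (Omega : Type) (X : R -> Omega -> R) r w :
  (0 <= root_time X r w)%E.
Proof. by apply: le_ereal_inf_tmp => _ [u [u0 _] <-]; rewrite lee_fin. Qed.

Lemma pathL (R : realType) (Omega : Type) (X : R -> Omega -> R) r w (x y s v : R) :
  {within [set t : R | 0 <= t], continuous (X ^~ w)} ->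
  0 <= s -> s <= v -> (r x%:E <= s%:E)%E -> (r y%:E <= s%:E)%E ->
  X v w \in `]x, y[ -> (v%:E <= root_time X r w)%E -> X s w \in `]x, y[.
Proof.
move=> Xc s0 sv rx ry; rewrite !in_itv /= => /andP[xv vy] vtau.
have cs := @cont_sub R (X ^~ w) s v s0 Xc.
have hit : forall c z, c \in `[s, v] -> X c w = z -> (r z%:E <= s%:E)%E -> z != X v w -> False.
  move=> c z; rewrite in_itv /= => /andP[sc cv] Xcz rz zv.
  have c0 : 0 <= c by exact: le_trans s0 sc.
  have : (root_time X r w <= c%:E)%E.
    by apply: tau_le => //; rewrite Xcz (le_trans rz) // lee_fin.
  have cv' : c < v.
    rewrite lt_neqAle cv andbT; apply/eqP => cveq; move: zv; by rewrite -Xcz cveq eqxx.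
  move=> tc; have : (v%:E < v%:E)%E.
    by apply: le_lt_trans (le_trans vtau tc) _; rewrite lte_fin.
  by rewrite ltxx.
apply/negPn/negP; rewrite negb_and -!leNgt => /orP[sx|ys].
- have hb : Num.min (X s w) (X v w) <= x <= Num.max (X s w) (X v w).
    by rewrite ge_min sx /= le_max (ltW xv) orbT.
  have [c cin Xc'] := @IVT R (X ^~ w) s v x sv cs hb.
  by apply: (hit c x cin Xc' rx); rewrite lt_eqF.
- have hb : Num.min (X s w) (X v w) <= y <= Num.max (X s w) (X v w).
    by rewrite ge_min (ltW vy) orbT le_max ys.
  have [c cin Xc'] := @IVT R (X ^~ w) s v y sv cs hb.
  by apply: (hit c y cin Xc' ry); rewrite gt_eqF.
Qed.

Lemma Et_eq (R : realType) (Omega : Type) (X : R -> Omega -> R)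
  (r : \bar R -> \bar R) (t : R) :
  [set w | (t%:E <= root_time X r w)%E] = \bigcap_m @Sset R Omega X r (t - m.+1%:R^-1).
Proof.
apply/seteqP; split => w.
- move=> tw m _ u /andP[u0 ut]; rewrite ltNge; apply/negP => ru.
  have := le_trans tw (@tau_le R Omega X r w u u0 ru); rewrite lee_fin => tu.
  have : t <= t - m.+1%:R^-1 by exact: le_trans tu ut.
  have : 0 < m.+1%:R^-1 :> R by rewrite invr_gt0.
  move: (m.+1%:R^-1 : R) => z; lra.
- move=> Hw; apply: le_ereal_inf_tmp => _ [u [u0 ru] <-].
  rewrite lee_fin leNgt; apply/negP => ut.
  have [k uk] := ltr_add_invr ut.
  have uk2 : u <= t - k.+1%:R^-1 by move: uk; move: (k.+1%:R^-1 : R) => z; lra.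
  have := Hw k I u; rewrite u0 uk2 => /(_ isT).
  by rewrite ltNge ru.
Qed.

Local Open Scope ereal_scope.

Theorem mainTheorem1 (R : realType) (d : measure_display) (Omega : measurableType d)
  (P : probability Omega R)
  (X : R -> Omega -> R) (O : set R) (mu0 mu : probability R R)
  (r : \bar R -> \bar R) (XT : Omega -> R)
  (* standing setting (pathwise/distributional part) *)
  (HPcomplete : measure_is_complete P)
  (HXmeas : forall t, (0 <= t)%R -> measurable_fun setT (X t))
  (HXcont : forall w, {within [set t : R | (0 <= t)%R], continuous (X ^~ w)})
  (HOopen : open O)
  (HXO : forall t w, (0 <= t)%R -> O (X t w))
  (HX0 : forall A, measurable A -> P (X 0%R @^-1` A) = mu0 A)
  (Hmu0O : mu0 (~` O) = 0) (HmuO : mu (~` O) = 0)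
  (Hpot : forall x : R, potential mu x <= potential mu0 x /\ -oo < potential mu x)
  (* r is a Root barrier *)
  (Hr0 : forall z, 0 <= r z) (Hrpinf : r +oo = 0) (Hrninf : r -oo = 0)
  (Hrlsc : lower_semicontinuous r)
  (HXTfin : forall w, root_time X r w < +oo -> XT w = X (fine (root_time X r w)) w)
  (HXTinf : {ae P, forall w, root_time X r w = +oo -> X u w @[u --> +oo%R] --> XT w})
  (HXTmeas : measurable_fun setT XT)
  (HXTlaw : forall A, measurable A -> P (XT @^-1` A) = mu A)
  (HUI : unif_integrable P (stopped X (root_time X r)))
  (* r is regular *)
  (Hreg : forall x : R, potential mu0 x = potential mu x -> r x%:E = 0)
  (x y s t : R) (Hxy : (x < y)%R) (Hs0 : (0 <= s)%R) (Hst : (s <= t)%R)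
  (Hrx : r x%:E <= s%:E) (Hry : r y%:E <= s%:E) :
  (forall vs : Omega -> R,
     [set w | (X (vs w) w \in `]x, y[) /\ (vs w)%:E <= root_time X r w /\ (t <= vs w)%R]
       `<=` [set w | (X s w \in `]x, y[)])
  /\ mu `]x, y[%classic <= mu_t P X (root_time X r) t `]x, y[%classic.
Proof.
split.
  move=> vs w [Hin [Hle Hge]].
  exact: (@pathL R Omega X r w x y s (vs w) (HXcont w) Hs0 (le_trans Hst Hge) Hrx Hry Hin Hle).
have t0 : (0 <= t)%R by exact: le_trans Hs0 Hst.
have rxt : r x%:E <= t%:E by rewrite (le_trans Hrx) // lee_fin.
have ryt : r y%:E <= t%:E by rewrite (le_trans Hry) // lee_fin.
set tau := root_time X r.
set I := `]x, y[%classic.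
have mI : measurable I by exact: measurable_itv.
set Et := [set w | t%:E <= tau w].
have mEt : measurable Et.
  rewrite /Et /tau (@Et_eq R Omega X r t); apply: bigcapT_measurable => m.
  exact: S_meas.
set B := [set w | I (stopped X tau t w)].
have Beq : B = (Et `&` X t @^-1` I) `|` (~` Et `&` XT @^-1` I).
  apply/seteqP; split=> w; rewrite /B /stopped /=.
  - case: ifPn => h.
    + by move=> Iw; left.
    + move=> Iw; right; split; first by move=> hE; move: h; rewrite hE.
      rewrite HXTfin //.
      by apply: lt_trans (ltry t); rewrite ltNge.
  - case: ifPn => h.
    + by case=> [[]|[]].
    + case=> [[hE _]|[_ Iw]]; first by move: h; rewrite hE.
      rewrite -HXTfin //.
      by apply: lt_trans (ltry t); rewrite ltNge.
have mB : measurable B.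
  rewrite Beq; apply: measurableU; apply: measurableI => //.
  - by rewrite -(setTI (X t @^-1` I)); exact: HXmeas.
  - exact: measurableC.
  - by rewrite -(setTI (XT @^-1` I)); exact: HXTmeas.
have [N0 [mN0 PN0 sub]] := HXTinf.
have AB : XT @^-1` I `<=` B `|` N0.
  move=> w Iw; have [Nw|Nw] := pselect (N0 w); [by right|left].
  have G : tau w = +oo -> X u w @[u --> +oo%R] --> XT w.
    by apply: contrapT => nG; apply: Nw; apply: sub.
  rewrite /B /stopped /=.
  case E: (tau w) => [f||].
  - have f0 : (0 <= f)%R by have := @tau_ge0 R Omega X r w; rewrite -/tau E lee_fin.
    have XTf : XT w = X f w by rewrite HXTfin -/tau E ?ltry.
    case: ifPn => h.
    + have tf : (t <= f)%R by rewrite -lee_fin.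
      have XfI : X f w \in `]x, y[ by rewrite -XTf.
      have ft : f%:E <= root_time X r w by rewrite -/tau E.
      exact: (@pathL R Omega X r w x y t f (HXcont w) t0 tf rxt ryt XfI ft).
    + by rewrite /= -XTf.
  - rewrite leey.
    have : \forall u \near +oo%R, X u w \in `]x, y[.
      have hn : nbhs (XT w) (`]x, y[%classic).
        by apply: open_nbhs_nbhs; split; [exact: itv_open|exact: Iw].
      exact: (G E _ hn).
    move=> [M [_ HM]].
    have tu : (t <= Num.max t (M + 1)%R)%R by rewrite le_max lexx.
    have uI : X (Num.max t (M + 1)%R) w \in `]x, y[.
      by apply: HM; rewrite lt_max ltrDl ltr01 orbT.
    have ut : (Num.max t (M + 1)%R)%:E <= root_time X r w by rewrite -/tau E leey.
    exact: (@pathL R Omega X r w x y t _ (HXcont w) t0 tu rxt ryt uI ut).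
  - by have := @tau_ge0 R Omega X r w; rewrite -/tau E.
rewrite /mu_t -/tau -/I -/B -HXTlaw //.
apply: (le_trans (le_measure _ _ _ AB)); rewrite ?inE.
- by rewrite -(setTI (XT @^-1` I)); exact: HXTmeas.
- exact: measurableU.
have /eqP := measureU0 mB mN0 PN0.
by rewrite eq_le => /andP[h1 _]; exact: h1.
Qed.
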